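(* Let $K$ be a field of characteristic zero and $n\ge3$. Let $i\in\{1,3,5,\dots,n-2\}$ if $n$ is odd, or $i\in\{2,4,6,\dots,n-2\}$ if $n$ is even. Then there exists a filiform Lie algebra $\mathfrak{g}$ over $K$ of dimension $n$ with $\chi(\mathfrak{g})=i$.
   Context: A filiform Lie algebra of dimension $n$ is a nilpotent Lie algebra with $\dim\mathfrak{g}^k=n-k$ for $2\le k\le n$ (lower central series $\mathfrak{g}^1=\mathfrak{g}$, $\mathfrak{g}^{k+1}=[\mathfrak{g},\mathfrak{g}^k]$). For $\ell\in\mathfrak{g}^*$, $\mathfrak{g}(\ell)=\{y\in\mathfrak{g}\mid\ell([x,y])=0\ \forall x\in\mathfrak{g}\}$ and $\chi(\mathfrak{g})=\min_{\ell\in\mathfrak{g}^*}\dim\mathfrak{g}(\ell)$. *)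

(* Defs.v *)
From HB Require Import structures.
From mathcomp Require Import all_boot all_order all_algebra.
Set Implicit Arguments. Unset Strict Implicit. Unset Printing Implicit Defensive.
Import GRing.Theory.
Local Open Scope ring_scope.

(* An n-dimensional Lie algebra over K is represented (up to isomorphism) by
   a bracket on the coordinate space K^n = 'rV[K]_n. *)
Section LieDefs.
Variables (K : fieldType) (n : nat).
Local Notation V := 'rV[K]_n.

Definition is_lie_bracket (br : V -> V -> V) : Prop :=
  [/\ (forall (a : K) (x y z : V), br (a *: x + y) z = a *: br x z + br y z),
      (forall (a : K) (x y z : V), br z (a *: x + y) = a *: br z x + br z y),
      (forall x : V, br x x = 0)
    & (forall x y z : V, br x (br y z) + br y (br z x) + br z (br x y) = 0)].

(* [g, W] for a subspace W (given as the row space of a matrix): the span of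
   all brackets [x, y], x in g, y in W; by bilinearity it is spanned by the
   brackets of the standard basis vectors with the rows of W. *)
Definition bracket_space (br : V -> V -> V) (W : 'M[K]_n) : 'M[K]_n :=
  (\sum_(i < n) \sum_(j < n) <<br (delta_mx 0 i) (row j W)>>)%MS.

(* lower central series, indexed from 1: lcs 1 = g, lcs (k+1) = [g, lcs k].
   (lcs 0 is also set to g, it is never used.) *)
Fixpoint lcs (br : V -> V -> V) (k : nat) : 'M[K]_n :=
  match k with
  | 0 => 1%:M
  | 1 => 1%:M
  | k'.+1 => bracket_space br (lcs br k')
  end.

Definition nilpotent_lie (br : V -> V -> V) : Prop :=
  exists k, \rank (lcs br k) = 0%N.

Definition filiform (br : V -> V -> V) : Prop :=
  nilpotent_lie br /\
  forall k, (2 <= k <= n)%N -> \rank (lcs br k) = (n - k)%N.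

(* A linear form l on g is represented by a column vector: l(x) = x *m l.
   stab_dim br l d : the subspace g(l) = {y | l([x,y]) = 0 for all x}
   has dimension d. *)
Definition stab_dim (br : V -> V -> V) (l : 'cV[K]_n) (d : nat) : Prop :=
  exists S : 'M[K]_n,
    (forall y : V, (y <= S)%MS <-> (forall x : V, br x y *m l = 0)) /\
    \rank S = d.

Definition chi_eq (br : V -> V -> V) (c : nat) : Prop :=
  (exists l, stab_dim br l c) /\
  (forall l d, stab_dim br l d -> (c <= d)%N).
End LieDefs.

(* Main.v *)
Require Import Defs.
From HB Require Import structures.
From mathcomp Require Import all_boot all_order all_algebra.
From mathcomp Require Import ring zify.
Set Implicit Arguments. Unset Strict Implicit. Unset Printing Implicit Defensive.
Import GRing.Theory.
Local Open Scope ring_scope.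

Lemma sum_pick (K : fieldType) (q t : nat) (F : nat -> K) :
  \sum_(k < q) ((k == t :> nat)%:R * F k) = (t < q)%:R * F t.
Proof.
elim: q => [|q IH]; first by rewrite big_ord0 ltn0 mul0r.
rewrite big_ord_recr /= IH ltnS.
by case: (ltngtP t q) => [h|h|->]; rewrite ?eqxx /=; ring.
Qed.

Section Fil.
Variable K : fieldType.
Variables p m : nat.
Local Notation n := p.+3.
Hypothesis hm : (1 <= m)%N.
Hypothesis hmn : (m.*2 < n)%N.

Definition w (a b : nat) : K :=
  if [&& 1 <= a, 1 <= b & a + b == m.*2.-1]%N then (-1) ^+ a else 0.
Definition W : 'M[K]_n := \matrix_(a, b) w a b.
Definition Nm : 'M[K]_n := \matrix_(a, b) ((a.+1 == b :> nat) && (2 <= b)%N)%:R.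
Definition e : 'rV[K]_n := delta_mx 0 ord_max.
Definition om (x y : 'rV[K]_n) : K := (x *m W *m y^T) 0 0.
Definition br (x y : 'rV[K]_n) : 'rV[K]_n :=
  x 0 0 *: (y *m Nm) - y 0 0 *: (x *m Nm) + om x y *: e.

Lemma sumNl (F : nat -> K) (a : nat) :
  \sum_(c < n) ((a.+1 == c :> nat) && (2 <= c)%N)%:R * F c
   = ((1 <= a)%N && (a.+1 < n)%N)%:R * F a.+1.
Proof.
rewrite (eq_bigr (fun c : 'I_n => (c == a.+1 :> nat)%:R * (((1 <= a)%N : nat)%:R * F c))).
  by rewrite (sum_pick _ _ (fun c => ((1 <= a)%N : nat)%:R * F c)); case: (1 <= a)%N; case: (a.+1 < n)%N; rewrite /=; ring.
move=> c _; rewrite eq_sym; case: eqP => [->|_] /=; last by rewrite !mul0r.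
by rewrite ltnS; case: (1 <= a)%N; rewrite /=; ring.
Qed.

Lemma NmE (x : 'rV[K]_n) (t : 'I_n) :
  (x *m Nm) 0 t = ((2 <= t)%N : nat)%:R * x 0 (inord t.-1).
Proof.
rewrite mxE.
rewrite (eq_bigr (fun c : 'I_n => (c == t.-1 :> nat)%:R * (((2 <= t)%N : nat)%:R * x 0 (inord c)))).
  rewrite (sum_pick _ _ (fun c => ((2 <= t)%N : nat)%:R * x 0 (inord c))); case: t => [[|[|t]] ht] //=; rewrite ?mul0r ?mulr0 //.
  by rewrite (ltn_trans _ ht) // mul1r.
move=> c _; rewrite mxE inord_val.
case: t => [[|[|t]] ht] /=; rewrite ?andbF /=; try ring.
by rewrite andbT mul1r mulrC.
Qed.

Lemma eE (t : 'I_n) : e 0 t = (t == n.-1 :> nat)%:R.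
Proof. by rewrite mxE. Qed.


Hypothesis Hchar : (2%:R : K) != 0.
Implicit Types x y z u v : 'rV[K]_n.

Lemma odd2m : odd (m.*2.-1).
Proof. by case: m hm => // m' _; rewrite doubleS /= odd_double. Qed.

Lemma w_anti a b : w b a = - w a b.
Proof.
rewrite /w addnC; case: (1 <= a)%N; case: (1 <= b)%N; rewrite /= ?oppr0 //.
case: eqP => [h|_]; last by rewrite oppr0.
have := odd2m; rewrite -h oddD => hab.
rewrite -(signr_odd _ b) -(signr_odd _ a).
by case: (odd a) hab; case: (odd b) => //= _; rewrite ?expr1 ?expr0 ?opprK.
Qed.

Lemma trW : W^T = - W.
Proof. by apply/matrixP => a b; rewrite !mxE w_anti. Qed.

Lemma om_delta a (y : 'rV[K]_n) : om (delta_mx 0 a) y = \sum_(b < n) w a b * y 0 b.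
Proof. by rewrite /om -rowE mxE; apply: eq_bigr => b _; rewrite !mxE. Qed.

Lemma om_linl c x y z : om (c *: x + y) z = c * om x z + om y z.
Proof. by rewrite /om !mulmxDl -!scalemxAl !mxE. Qed.

Lemma om_linr c x y z : om z (c *: x + y) = c * om z x + om z y.
Proof. by rewrite /om linearD linearZ /= mulmxDr -scalemxAr !mxE. Qed.

Lemma om_anti x y : om y x = - om x y.
Proof.
rewrite /om -[in LHS](trmxK (y *m W *m x^T)) [in LHS]mxE.
by rewrite !trmx_mul trmxK trW mulNmx mulmxN mulmxA mxE.
Qed.

Lemma om_xx x : om x x = 0.
Proof.
have h := om_anti x x; have : om x x * 2%:R = 0.
  by rewrite mulr_natr mulr2n {1}h addNr.
by move/eqP; rewrite mulf_eq0 (negbTE Hchar) orbF => /eqP.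
Qed.

Lemma NmW : Nm *m W + W *m Nm^T = 0.
Proof.
apply/matrixP => a b; rewrite !mxE.
under eq_bigr => c _ do rewrite !mxE.
under [X in _ + X]eq_bigr => c _ do rewrite !mxE mulrC.
rewrite (sumNl (fun c => w c b)) (sumNl (fun c => w a c)).
rewrite /w /= addnS addSn.
case: eqP => [h|_]; last by rewrite !andbF !mulr0 addr0.
have ha : (a.+1 < n)%N by lia.
have hb : (b.+1 < n)%N by lia.
rewrite ha hb /= !andbT.
case: (1 <= a)%N; case: (1 <= b)%N; rewrite /= ?mul0r ?mulr0 ?addr0 //.
by rewrite exprS; ring.
Qed.

Lemma om_cocycle x z : om (x *m Nm) z + om x (z *m Nm) = 0.
Proof.
transitivity ((x *m (Nm *m W + W *m Nm^T) *m z^T) 0 0).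
  by rewrite mulmxDr mulmxDl mxE /om trmx_mul !mulmxA.
by rewrite NmW mulmx0 mul0mx mxE.
Qed.


Lemma ordv (t : 'I_n) : (inord t.-1 : 'I_n) = t.-1 :> nat.
Proof. by rewrite inordK // (leq_ltn_trans (leq_pred _)) // ltnW. Qed.

Lemma om_last (x v : 'rV[K]_n) : (forall b : 'I_n, (b < n.-1)%N -> v 0 b = 0) -> om x v = 0.
Proof.
move=> hv; rewrite /om -mulmxA.
suff -> : W *m v^T = 0 by rewrite mulmx0 mxE.
apply/matrixP => a j; rewrite !mxE big1 // => b _; rewrite !mxE.
case: (ltnP b n.-1) => hb; first by rewrite (ord1 j) hv // mulr0.
rewrite /w; case: ifP => [/and3P [_ _ /eqP h]|]; last by rewrite mul0r.
have := ltn_ord b; lia.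
Qed.

Lemma eN : e *m Nm = 0.
Proof.
apply/rowP => t; rewrite NmE eE ordv !mxE.
case: t => [[|[|t]] ht] //=; rewrite ?mul0r //.
rewrite eqSS; have -> : (t == p.+1) = false by lia. 
by rewrite mulr0.
Qed.

Lemma N00 x : (x *m Nm) 0 0 = 0.
Proof. by rewrite NmE mul0r. Qed.

Lemma e00 : e 0 0 = 0.
Proof. by rewrite eE. Qed.

Lemma br0 x y : (br x y) 0 0 = 0.
Proof.
rewrite /br; move: (N00 x) (N00 y); move: (x *m Nm) (y *m Nm) => X Y h1 h2.
by rewrite !mxE h1 h2 /= !mulr0 subrr add0r.
Qed.

Lemma brN x y : br x y *m Nm = x 0 0 *: (y *m Nm *m Nm) - y 0 0 *: (x *m Nm *m Nm).
Proof. by rewrite /br mulmxDl mulmxBl -!scalemxAl eN scaler0 addr0. Qed.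

Lemma om_r_add z u v : om z (u + v) = om z u + om z v.
Proof. by rewrite -{1}[u]scale1r om_linr mul1r. Qed.
Lemma om_r_scale z c u : om z (c *: u) = c * om z u.
Proof. by rewrite -[c *: u]addr0 om_linr {2}/om linear0 mulmx0 mxE addr0. Qed.
Lemma om_r_opp z u : om z (- u) = - om z u.
Proof. by rewrite -scaleN1r om_r_scale mulN1r. Qed.

Lemma om_br z x y : om z (br x y) = x 0 0 * om z (y *m Nm) - y 0 0 * om z (x *m Nm).
Proof.
rewrite /br om_r_add om_r_add om_r_opp !om_r_scale (om_last z (v := e)) ?mulr0 ?addr0 //.
by move=> b hb; rewrite eE; case: eqP => // h; rewrite h ltnn in hb.
Qed.

Lemma om_sym u v : om u (v *m Nm) = om v (u *m Nm).
Proof. by have := om_cocycle u v; rewrite om_anti => /eqP; rewrite addrC addr_eq0 opprK => /eqP. Qed.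

Lemma jacobi x y z : br x (br y z) + br y (br z x) + br z (br x y) = 0.
Proof.
rewrite {1 3 5}/br !brN !br0 !om_br.
rewrite [om z (x *m Nm)]om_sym [om y (x *m Nm)]om_sym [om z (y *m Nm)]om_sym.
move: (x *m Nm *m Nm) (y *m Nm *m Nm) (z *m Nm *m Nm) => A B C.
set a := x 0 0; set b := y 0 0; set c := z 0 0.
apply/rowP => j; rewrite !mxE; ring.
Qed.

Lemma br_linl c x y z : br (c *: x + y) z = c *: br x z + br y z.
Proof.
rewrite /br om_linl mulmxDl -scalemxAl.
move: (x *m Nm) (y *m Nm) (z *m Nm) => X Y Z.
apply/rowP => j; rewrite !mxE; ring.
Qed.

Lemma br_linr c x y z : br z (c *: x + y) = c *: br z x + br z y.
Proof.
rewrite /br om_linr mulmxDl -scalemxAl.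
move: (x *m Nm) (y *m Nm) (z *m Nm) => X Y Z.
apply/rowP => j; rewrite !mxE; ring.
Qed.

Lemma br_xx x : br x x = 0.
Proof. by rewrite /br om_xx scale0r addr0 subrr. Qed.


Lemma lie : is_lie_bracket br.
Proof.
split; [exact: br_linl | exact: br_linr | exact: br_xx | exact: jacobi].
Qed.

Lemma pidE v k (j : 'I_n) : (v *m (pid_mx k : 'M[K]_n)) 0 j = ((j < k)%N)%:R * v 0 j.
Proof.
rewrite mxE (bigD1 j) //= big1 ?addr0.
  by rewrite mxE eqxx /=; ring.
by move=> c hc; rewrite mxE (_ : (c == j :> nat) = false) ?mulr0 //; exact: negbTE hc.
Qed.

Lemma copidP k v : (k <= n)%N ->
  reflect (forall j : 'I_n, (j < k)%N -> v 0 j = 0) (v <= copid_mx k)%MS.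
Proof.
move=> hk; apply: (iffP idP).
  case/submxP => D ->{v} j hj.
  have : (D *m copid_mx k *m (pid_mx k : 'M[K]_n)) 0 j = 0.
    by rewrite -mulmxA mul_copid_mx_pid // mulmx0 mxE.
  by rewrite pidE hj mul1r.
move=> hv.
have -> : v = v *m copid_mx k; last exact: submxMl.
have h0 : v *m (pid_mx k : 'M[K]_n) = 0.
  apply/rowP => j; rewrite pidE mxE; case: (ltnP j k) => h; [by rewrite (hv j h) mulr0 | by rewrite mul0r].
by rewrite /copid_mx mulmxBr mulmx1 h0 subr0.
Qed.

Lemma coord_sub k0 (X : 'M[K]_(k0, n)) v :
  (forall j : 'I_n, v 0 j != 0 -> ((delta_mx 0 j : 'rV[K]_n) <= X)%MS) -> (v <= X)%MS.
Proof.
move=> h; rewrite (row_sum_delta v); apply: summx_sub => j _.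
by case: (eqVneq (v 0 j) 0) => [->|/h hj]; [rewrite scale0r sub0mx | exact: scalemx_sub].
Qed.

Lemma bs_upper (A X : 'M[K]_n) :
  (forall (a j : 'I_n), (br (delta_mx 0 a) (row j A) <= X)%MS) ->
  (bracket_space br A <= X)%MS.
Proof.
move=> h; apply/sumsmx_subP => a _; apply/sumsmx_subP => j _.
by rewrite genmxE h.
Qed.

Lemma br_f0 y : br (delta_mx 0 0) y = y *m Nm.
Proof.
have h1 : (delta_mx 0 0 : 'rV[K]_n) *m Nm = 0.
  by apply/rowP => t; rewrite NmE !mxE eqxx /= -val_eqE /= ordv; case: t => [[|[|t]] ht] /=; ring.
have h2 : om (delta_mx 0 0) y = 0.
  by rewrite om_delta big1 // => b _; rewrite /w /= mul0r.
by rewrite /br h1 h2 mxE /= scale1r scaler0 scale0r subr0 addr0.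
Qed.

Lemma bs_lower (A : 'M[K]_n) : (A *m Nm <= bracket_space br A)%MS.
Proof.
apply/row_subP => r; rewrite row_mul -br_f0.
apply: (sumsmx_sup 0) => //; apply: (sumsmx_sup r) => //.
by rewrite genmxE.
Qed.

Lemma dshift (j : 'I_n) : (2 <= j)%N -> delta_mx 0 (inord j.-1) *m Nm = delta_mx 0 j :> 'rV[K]_n.
Proof.
move=> hj; apply/rowP => t; rewrite NmE !mxE /= -!val_eqE /= !ordv.
case: t => [[|[|t]] ht] /=; case: j hj => [[|[|j]] hj] //= _; rewrite ?mul1r ?mul0r //.
Qed.

Lemma brcoord k x v : (forall s : 'I_n, (s < k)%N -> v 0 s = 0) ->
  forall t : 'I_n, ((t < 2) || ((1 <= k) && (t <= k)))%N -> (br x v) 0 t = 0.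
Proof.
move=> hv t ht.
have E : (br x v) 0 t = x 0 0 * (v *m Nm) 0 t - v 0 0 * (x *m Nm) 0 t + om x v * e 0 t.
  by rewrite /br; move: (v *m Nm) (x *m Nm) => V X; rewrite !mxE.
rewrite E !NmE eE.
case/orP: ht => [ht2|/andP [hk htk]].
  have -> : (2 <= t)%N = false by lia.
  have -> : (t == n.-1 :> nat) = false by lia.
  by rewrite /=; ring.
case: (leqP 2 t) => h2; last first.
  have -> : (t == n.-1 :> nat) = false by lia.
  by rewrite /=; ring.
rewrite hv; last by rewrite ordv; lia.
rewrite (hv 0) //=.
case: eqP => [htn|_]; last by rewrite /=; ring.
rewrite om_last; first by rewrite /=; ring.
move=> b hb; apply: hv; lia.
Qed.

Lemma step_upper k k' (A : 'M[K]_n) : (k' <= n)%N ->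
  (forall j : 'I_n, forall s : 'I_n, (s < k)%N -> (row j A) 0 s = 0) ->
  (forall t, t < k' -> (t < 2) || ((1 <= k) && (t <= k)))%N ->
  (bracket_space br A <= copid_mx k')%MS.
Proof.
move=> hk' hA ht; apply: bs_upper => a j; apply/copidP => // t htk.
exact: (@brcoord k (delta_mx 0 a) (row j A) (hA j) t (ht _ htk)).
Qed.

Lemma step_lower k' (A : 'M[K]_n) : (2 <= k')%N -> (k' <= n)%N ->
  (forall j : 'I_n, (k' <= j)%N -> ((delta_mx 0 (inord j.-1) : 'rV[K]_n) <= A)%MS) ->
  (copid_mx k' <= bracket_space br A)%MS.
Proof.
move=> hk hk' hA; apply/row_subP => r.
have hr : forall j : 'I_n, (j < k')%N -> (row r (copid_mx k') : 'rV[K]_n) 0 j = 0.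
  by apply/copidP => //; exact: row_sub.
apply: coord_sub => j hj.
have hkj : (k' <= j)%N.
  by rewrite leqNgt; apply/negP => /hr hj0; rewrite hj0 eqxx in hj.
rewrite -dshift; last exact: leq_trans hkj.
apply: submx_trans (bs_lower A); apply: submxMr; exact: hA.
Qed.



Lemma delta_copid k (j : 'I_n) : (k <= n)%N -> (k <= j)%N ->
  ((delta_mx 0 j : 'rV[K]_n) <= copid_mx k)%MS.
Proof.
move=> hk hj; apply/copidP => // s hs; rewrite mxE /=.
by rewrite (_ : (s == j) = false) //; apply/negbTE; rewrite -val_eqE /= neq_ltn (leq_trans hs hj).
Qed.

Lemma lcs_copid d : (d.+2 <= n)%N -> (lcs br d.+2 == copid_mx d.+2)%MS.
Proof.
elim: d => [|d IH] hd.
  rewrite /= /eqmx; apply/andP; split.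
    by apply: (@step_upper 0) => // t ->.
  apply: (@step_lower 2) => // j _. exact: submx1.
have IH' := IH (ltnW hd).
move/andP: IH' => [h1 h2].
have -> : lcs br d.+3 = bracket_space br (lcs br d.+2) by [].
apply/andP; split.
  apply: (@step_upper d.+2) => // [j s hs|t ht].
    have : ((row j (lcs br d.+2)) <= copid_mx d.+2)%MS.
      exact: submx_trans (row_sub _ _) h1.
    by move/copidP => /(_ (ltnW hd)); apply.
  by rewrite orbC /= -ltnS ht.
apply: step_lower => // j hj; apply: submx_trans h2.
apply: delta_copid; first exact: ltnW hd.
rewrite ordv; lia.
Qed.

Lemma fil : filiform br.
Proof.
have key : forall k, (2 <= k <= n)%N -> \rank (lcs br k) = (n - k)%N.
  move=> k /andP []; case: k => [|[|d]] // _ hd.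
  by rewrite (eqmx_rank (lcs_copid hd)) rank_copid_mx.
split => //; exists n; rewrite key; [exact: subnn | lia].
Qed.


Definition e0c : 'cV[K]_n := delta_mx 0 0.
Definition G (l : 'cV[K]_n) : 'M[K]_n :=
  e0c *m (Nm *m l)^T - (Nm *m l) *m e0c^T + (e *m l) 0 0 *: W.

Lemma m11 (A B : 'M[K]_1) : (A *m B) 0 0 = A 0 0 * B 0 0.
Proof. by rewrite mxE big_ord1. Qed.

Lemma xe0 (x : 'rV[K]_n) : (x *m e0c) 0 0 = x 0 0.
Proof. by rewrite /e0c -colE mxE. Qed.

Lemma Bform x y l : (br x y *m l) 0 0 = (x *m G l *m y^T) 0 0.
Proof.
have L : (br x y *m l) 0 0 = x 0 0 * (y *m Nm *m l) 0 0 - y 0 0 * (x *m Nm *m l) 0 0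
    + om x y * (e *m l) 0 0.
  rewrite /br mulmxDl mulmxBl -!scalemxAl.
  by move: (y *m Nm *m l) (x *m Nm *m l) (e *m l) => A B C; rewrite !mxE.
have R1 : (x *m (e0c *m (Nm *m l)^T) *m y^T) 0 0 = x 0 0 * (y *m Nm *m l) 0 0.
  by rewrite -!mulmxA (mulmxA x) m11 xe0 -trmx_mul mxE !mulmxA.
have R2 : (x *m ((Nm *m l) *m e0c^T) *m y^T) 0 0 = (x *m Nm *m l) 0 0 * y 0 0.
  by rewrite !mulmxA -(mulmxA (x *m Nm *m l)) m11 -trmx_mul [(y *m e0c)^T 0 0]mxE xe0.
have R3 : (x *m ((e *m l) 0 0 *: W) *m y^T) 0 0 = (e *m l) 0 0 * om x y.
  by rewrite -scalemxAr -scalemxAl mxE.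
rewrite L /G mulmxDr mulmxBr mulmxDl mulmxBl.
move: R1 R2 R3.
move: (x *m (e0c *m (Nm *m l)^T) *m y^T) (x *m ((Nm *m l) *m e0c^T) *m y^T) (x *m ((e *m l) 0 0 *: W) *m y^T) => P Q R.
move: (y *m Nm *m l) (x *m Nm *m l) (e *m l) => A B C.
by move=> R1 R2 R3; rewrite !mxE R1 R2 R3; ring.
Qed.


Lemma kerchar l y : (forall x, br x y *m l = 0) <-> y *m (G l)^T = 0.
Proof.
split => [h|h x].
  apply: trmx_inj; rewrite trmx_mul trmxK trmx0.
  apply/colP => a; rewrite [RHS]mxE.
  have := h (delta_mx 0 a); move/(congr1 (fun M : 'M[K]_1 => M 0 0)).
  by rewrite Bform -mulmxA -rowE mxE => ->; rewrite mxE.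
apply/matrixP => i j; rewrite !ord1 Bform -mulmxA.
have -> : G l *m y^T = (y *m (G l)^T)^T by rewrite trmx_mul trmxK.
by rewrite h trmx0 mulmx0 !mxE.
Qed.

Definition q := m.-1.*2.
Definition Aw : 'M[K]_(n, q) := \matrix_(a, k) (a == k.+1 :> nat)%:R.
Definition Rw : 'M[K]_(q, n) := \matrix_(k, b) w k.+1 b.

Lemma W_fact : W = Aw *m Rw.
Proof.
apply/matrixP => a b; rewrite !mxE.
rewrite (eq_bigr (fun k : 'I_q => (k == a.-1 :> nat)%:R * (((1 <= a)%N : nat)%:R * w k.+1 b))).
  rewrite (sum_pick _ _ (fun k => ((1 <= a)%N : nat)%:R * w k.+1 b)).
  case: a => [[|a] ha] /=; first by rewrite /w /= mul0r mulr0.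
  case: (ltnP a q) => hq; first by rewrite !mul1r.
  rewrite mul0r /w; case: ifP => [/and3P [_ hb /eqP h]|] //.
  exfalso; move: hq; rewrite /q; lia.
move=> k _; rewrite !mxE; case: a => [[|a] ha] /=; first by rewrite !mul0r mulr0.
by rewrite eqSS eq_sym; ring.
Qed.

Lemma rankW : (\rank W <= q)%N.
Proof. by rewrite W_fact (leq_trans (mxrankM_maxl _ _)) // rank_leq_col. Qed.

Lemma rankG l : (\rank (G l) <= m.*2)%N.
Proof.
rewrite /G; set c := (e *m l) 0 0.
apply: (leq_trans (mxrank_add _ _)).
have h1 : (\rank (e0c *m (Nm *m l)^T) <= 1)%N.
  exact: leq_trans (mxrankM_maxl _ _) (rank_leq_col _).
have h2 : (\rank (- ((Nm *m l) *m e0c^T)) <= 1)%N.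
  by rewrite mxrank_opp; exact: leq_trans (mxrankM_maxr _ _) (rank_leq_row _).
have h3 : (\rank (c *: W) <= q)%N.
  by rewrite -mul_scalar_mx (leq_trans (mxrankM_maxr _ _)) // rankW.
have : (\rank (e0c *m (Nm *m l)^T - (Nm *m l) *m e0c^T)%R <= 2)%N.
  exact: leq_trans (mxrank_add _ _) (leq_add h1 h2).
move: h3; rewrite /q; lia.
Qed.

Lemma stab_ker l (S : 'M[K]_n) :
  (forall y, (y <= S)%MS <-> (forall x, br x y *m l = 0)) ->
  (S == kermx (G l)^T)%MS.
Proof.
move=> hS; apply/andP; split; apply/row_subP => r.
  by apply/sub_kermxP; apply/kerchar; apply/hS; exact: row_sub.
apply/hS; apply/kerchar; apply/sub_kermxP; exact: row_sub.
Qed.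

Lemma chi_min l d : stab_dim br l d -> (n - m.*2 <= d)%N.
Proof.
case=> S [hS <-]; rewrite (eqmx_rank (stab_ker hS)) mxrank_ker mxrank_tr.
have := rankG l; lia.
Qed.


Definition l0 : 'cV[K]_n := delta_mx ord_max 0.

Lemma inordE a : (a < n)%N -> (inord a : 'I_n) = a :> nat.
Proof. by move=> h; rewrite inordK. Qed.

Lemma brlast x y : (br x y) 0 ord_max =
  x 0 0 * y 0 (inord n.-2) - y 0 0 * x 0 (inord n.-2) + om x y.
Proof.
have E : (br x y) 0 ord_max = x 0 0 * (y *m Nm) 0 ord_max - y 0 0 * (x *m Nm) 0 ord_max + om x y * e 0 ord_max.
  by rewrite /br; move: (y *m Nm) (x *m Nm) => V X; rewrite !mxE.
by rewrite E !NmE eE /= eqxx /=; ring.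
Qed.

Lemma om_da a y : (1 <= a)%N -> (a <= q)%N ->
  om (delta_mx 0 (inord a)) y = (-1) ^+ a * y 0 (inord (m.*2.-1 - a)).
Proof.
move=> h1 h2; have han : (a < n)%N by move: h2; rewrite /q; lia.
rewrite om_delta inordE //.
rewrite (eq_bigr (fun b : 'I_n => (b == (m.*2.-1 - a)%N :> nat)%:R * ((-1) ^+ a * y 0 (inord b)))).
  rewrite (sum_pick _ _ (fun b => (-1) ^+ a * y 0 (inord b))).
  by rewrite (_ : ((m.*2.-1 - a)%N < n)%N = true) ?mul1r //; lia.
move=> b _; rewrite inord_val /w.
have -> : [&& (1 <= a)%N, (1 <= b)%N & ((a + b)%N == m.*2.-1)] = (b == (m.*2.-1 - a)%N :> nat).
  move: h2; rewrite /q => h2.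
  apply/idP/idP => [/and3P [_ _ /eqP h]|/eqP h]; first by apply/eqP; lia.
  apply/and3P; split => //; [lia | apply/eqP; lia].
by case: (b == _ :> nat); rewrite /=; ring.
Qed.

Lemma ker_coord y : (forall x, br x y *m l0 = 0) ->
  forall j : 'I_n, y 0 j != 0 -> (q < j)%N && (j != n.-2 :> nat).
Proof.
move=> H.
have Hx : forall x, (br x y) 0 ord_max = 0.
  move=> x; have := H x; rewrite /l0 -colE => /(congr1 (fun M : 'M[K]_(1,1) => M 0 0)).
  by rewrite !mxE.
move=> j hj; apply/andP; split; last first.
  apply/negP => /eqP hjn; move: hj; have := Hx (delta_mx 0 0).
  rewrite br_f0 NmE /= mul1r (_ : inord n.-2 = j); first by move=> ->; rewrite eqxx.
  by apply: val_inj; rewrite /= inordE // hjn.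
rewrite ltnNge; apply/negP => hjq.
case: (posnP j) => [j0|jpos].
  have := Hx (delta_mx 0 (inord n.-2)); rewrite brlast !mxE /=.
  rewrite (_ : (0 == inord p.+1 :> 'I_n) = false); last by rewrite -val_eqE /= inordE.
  rewrite eqxx /= om_delta big1 => [|b _]; last first.
    rewrite /w inordE //; case: ifP => [/and3P [_ hb /eqP h]|]; last by rewrite mul0r.
    exfalso; lia.
  move: hj; have -> : j = 0 by apply: val_inj.
  by rewrite mul0r mulr1 add0r addr0 => /negbTE h /eqP; rewrite oppr_eq0 h.
set a := (m.*2.-1 - j)%N.
have ha1 : (1 <= a)%N by move: hjq; rewrite /a /q; lia.
have haq : (a <= q)%N by move: jpos hjq; rewrite /a /q; lia.
have := Hx (delta_mx 0 (inord a)); rewrite brlast om_da // !mxE /=.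
rewrite (_ : (0 == inord a :> 'I_n) = false); last by rewrite -val_eqE /= inordE //; move: haq; rewrite /q; lia.
rewrite (_ : (inord p.+1 == inord a :> 'I_n) = false); last first.
  rewrite -val_eqE /= !inordE //; move: haq; rewrite /q; lia.
rewrite (_ : inord (m.*2.-1 - a) = j); last first.
  apply: val_inj; rewrite /= inordE; move: jpos hjq; rewrite /a /q; lia.
rewrite !mul0r !mulr0 subr0 add0r => /eqP; rewrite mulf_eq0 signr_eq0 /=.
by move=> h; rewrite h in hj.
Qed.


Definition ii := (n - m.*2)%N.
Definition phi (k : nat) : nat := if (k < ii.-1)%N then (m.*2.-1 + k)%N else n.-1.
Definition Tm : 'M[K]_(ii, n) := \matrix_(k, j) (j == phi k :> nat)%:R.

Lemma T_row (j : 'I_n) : (q < j)%N -> (j != n.-2 :> nat) ->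
  ((delta_mx 0 j : 'rV[K]_n) <= Tm)%MS.
Proof.
move=> hq hj.
have [k hk] : exists k : 'I_ii, phi k = j.
  case: (eqVneq (j : nat) n.-1) => hjn.
    have hk : (ii.-1 < ii)%N by rewrite /ii; lia.
    by exists (Ordinal hk); rewrite /phi /= ltnn hjn.
  have hk : ((j - m.*2.-1)%N < ii)%N.
    by move: hq hj hjn (ltn_ord j); rewrite /ii /q; lia.
  exists (Ordinal hk); rewrite /phi /=.
  have -> : ((j - m.*2.-1)%N < ii.-1)%N = true.
    by move: hq hj hjn (ltn_ord j); rewrite /ii /q; lia.
  by move: hq; rewrite /q; lia.
have -> : (delta_mx 0 j : 'rV[K]_n) = row k Tm.
  by apply/rowP => t; rewrite !mxE hk.
exact: row_sub.
Qed.

Lemma chi_exists : stab_dim br l0 ii.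
Proof.
have hS : forall y, (y <= kermx (G l0)^T)%MS <-> (forall x, br x y *m l0 = 0).
  by move=> y; split => [/sub_kermxP/kerchar|/kerchar/sub_kermxP].
exists (kermx (G l0)^T); split => //.
apply/eqP; rewrite eqn_leq; apply/andP; split; last first.
  by apply: (chi_min (d := \rank (kermx (G l0)^T))); exists (kermx (G l0)^T).
have sT : (kermx (G l0)^T <= Tm)%MS.
  apply/row_subP => r; apply: coord_sub => j hj.
  have := ker_coord (proj1 (hS _) (row_sub r _)) hj.
  by case/andP; exact: T_row.
exact: leq_trans (mxrankS sT) (rank_leq_row _).
Qed.

Lemma chi : chi_eq br ii.
Proof. by split; [exists l0; exact: chi_exists | exact: chi_min]. Qed.

End Fil.


Theorem corollary6p8 (K : fieldType) (n i : nat) :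
  [pchar K] =i pred0 ->
  (3 <= n)%N ->
  (1 <= i)%N -> (i <= n - 2)%N -> odd i = odd n ->
  exists br : 'rV[K]_n -> 'rV[K]_n -> 'rV[K]_n,
    is_lie_bracket br /\ filiform br /\ chi_eq br i.
Proof.
move=> hc hn hi1 hi2 hodd.
case: n hn hi2 hodd => [|[|[|p]]] // _ hi2 hodd.
set m := ((p.+3 - i) ./2)%N.
have ho : odd (p.+3 - i) = false.
  by rewrite oddB ?hodd ?addbb //; lia.
have hm2 : m.*2 = (p.+3 - i)%N.
  by have := odd_double_half (p.+3 - i); rewrite ho add0n.
have hm : (1 <= m)%N by lia.
have hmn : (m.*2 < p.+3)%N by lia.
have H2 : (2%:R : K) != 0 by move/pcharf0P: hc => ->.
have -> : i = (p.+3 - m.*2)%N by lia.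
exists (@br K p m); split; first exact: lie.
split; first exact: fil.
exact: chi.
Qed.
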